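(* Let a Hedonic diversity game contain a red agent $R$, a blue agent $B$ and $m\ge 1$ green agents, where the red, blue and green color classes are exactly $\{R\}$, $\{B\}$ and the set of these $m$ green agents, respectively (other colors may be present). For $j\in[m]$ write $G^jR$ (resp. $G^jB$) for the palette of a set consisting of $j$ green agents and $R$ (resp. $B$), write $RB$ for the palette of $\{R,B\}$, $\mathbf{R}$ for the palette of $\{R\}$, $\mathbf{B}$ for the palette of $\{B\}$, and $\mathbf{G}$ for the palette of any nonempty set of green agents only. Let $\mathcal{M}_G$ be a set of palettes, each of which is the palette of a set containing at least one green agent and at least one agent that is neither red, blue nor green. Suppose the preferences are: $R$: $RB \succ G^mR\succ\cdots\succ G^1R \succ \mathbf{R} \succ$ every other palette; $B$: $G^mB\succ\cdots\succ G^1B \succ RB \succ \mathbf{B}\succ$ every other palette; every green agent: every palette in $\mathcal{M}_G$ (in arbitrary mutual order) $\succ G^mR\succ\cdots\succ G^1R\succ G^mB\succ\cdots\succ G^1B\succ \mathbf{G}\succ$ every other palette. Then every outcome in which some green agent belongs to a coalition whose palette is not in $\mathcal{M}_G$ is neither individually stable nor Nash stable.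
   Context: A Hedonic diversity game consists of a set $N=[n]$ of agents partitioned into color classes $D_1,\dots,D_\gamma$, and, for each agent $i\in N$, a weak order $\succeq_i$ over palettes, where the palette of a nonempty set $X\subseteq N$ is the tuple $\left(|D_c\cap X|/|X|\right)_{c\in[\gamma]}$; agent $i$ compares nonempty sets $X,Y\subseteq N$ through their palettes. A coalition is a nonempty subset of $N$. An outcome is a partition $\Pi$ of $N$ into coalitions; $\Pi_i$ denotes the coalition of $\Pi$ containing agent $i$. Agent $i$ has an NS-deviation if there is $C\in\Pi\cup\{\emptyset\}$ with $i\notin C$ and $C\cup\{i\}\succ_i\Pi_i$; it is an IS-deviation if moreover $C\cup\{i\}\succeq_j C$ for every $j\in C$. $\Pi$ is Nash stable if no agent has an NS-deviation, and individually stable if no agent has an IS-deviation. *)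

(* Defs.v *)
From mathcomp Require Import all_boot all_order all_algebra.
Set Implicit Arguments. Unset Strict Implicit. Unset Printing Implicit Defensive.
Import Order.TTheory GRing.Theory Num.Theory.

Definition palette_t (gamma : nat) := {ffun 'I_gamma -> rat}.

Definition palette (n gamma : nat) (col : 'I_n -> 'I_gamma) (X : {set 'I_n})
  : palette_t gamma :=
  [ffun c => (#|[set i in X | col i == c]|%:R / #|X|%:R)%R].

Definition strict (T : Type) (r : rel T) (x y : T) : bool := r x y && ~~ r y x.

Definition weak_order (T : Type) (r : rel T) : Prop := total r /\ transitive r.

Section Game.
Variables (n gamma : nat) (col : 'I_n -> 'I_gamma)
          (pref : 'I_n -> rel (palette_t gamma)).

Definition sprefS (i : 'I_n) (X Y : {set 'I_n}) : bool :=
  strict (pref i) (palette col X) (palette col Y).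
Definition wprefS (i : 'I_n) (X Y : {set 'I_n}) : bool :=
  pref i (palette col X) (palette col Y).

(* outcomes: partitions of N into coalitions (nonempty blocks); Pi_i = pblock P i *)
Definition NS_deviation (P : {set {set 'I_n}}) (i : 'I_n) : Prop :=
  exists C : {set 'I_n}, (C \in P \/ C = set0) /\ i \notin C /\
    sprefS i (C :|: [set i]) (pblock P i).

Definition IS_deviation (P : {set {set 'I_n}}) (i : 'I_n) : Prop :=
  exists C : {set 'I_n}, (C \in P \/ C = set0) /\ i \notin C /\
    sprefS i (C :|: [set i]) (pblock P i) /\
    (forall j, j \in C -> wprefS j (C :|: [set i]) C).

Definition nash_stable (P : {set {set 'I_n}}) : Prop :=
  forall i, ~ NS_deviation P i.

Definition individually_stable (P : {set {set 'I_n}}) : Prop :=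
  forall i, ~ IS_deviation P i.
End Game.

Definition firstk (n : nat) (S : {set 'I_n}) (j : nat) : {set 'I_n} :=
  [set x in take j (enum S)].

(* Main.v *)
Require Import Defs.
From mathcomp Require Import all_boot all_order all_algebra.
From mathcomp Require Import zify.
From Stdlib Require Import Classical.
Import GRing.Theory Num.Theory.
Set Implicit Arguments. Unset Strict Implicit. Unset Printing Implicit Defensive.

Lemma nat_div_eq (a b c d : nat) : 0 < b -> 0 < d ->
  ((a%:R / b%:R)%R = (c%:R / d%:R)%R :> rat) -> a * d = c * b.
Proof.
move=> hb hd /eqP; rewrite eqr_div ?pnatr_eq0 -?lt0n // -!natrM eqr_nat.
by move/eqP.
Qed.

Lemma strict_trans (T : Type) (r : rel T) : weak_order r ->
  forall a b c, strict r a b -> strict r b c -> strict r a c.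
Proof.
move=> [_ tr] a b c /andP[hab nba] /andP[hbc ncb]; apply/andP; split.
  exact: tr hab hbc.
by apply/negP => hca; move/negP: ncb; apply; exact: tr hca hab.
Qed.

Lemma strictW (T : Type) (r : rel T) a b : strict r a b -> r a b.
Proof. by case/andP. Qed.

Lemma chain_lo (T : Type) (r : rel T) (f : nat -> T) (m : nat) (z : T) :
  weak_order r -> (forall j, 1 <= j < m -> strict r (f j.+1) (f j)) ->
  strict r (f 1) z -> forall k, 1 <= k <= m -> strict r (f k) z.
Proof.
move=> wo hc h1; elim=> [|k IH] //; case: k IH => [|k] IH // /andP[_ hk].
apply: (strict_trans wo (b := f k.+1)); first by apply: hc; lia.
apply: IH; lia.
Qed.

Lemma chain_hi (T : Type) (r : rel T) (f : nat -> T) (m : nat) (z : T) :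
  weak_order r -> (forall j, 1 <= j < m -> strict r (f j.+1) (f j)) ->
  strict r z (f m) -> forall k, 1 <= k <= m -> strict r z (f k).
Proof.
move=> wo hc hm k hk; have [d hd] : exists d, k + d = m by exists (m - k); lia.
elim: d k hk hd => [|d IH] k hk hd; first by rewrite -hd addn0 in hm.
apply: (strict_trans wo (b := f k.+1)); first by apply: IH; lia.
apply: hc; lia.
Qed.

Lemma firstk_sub (n : nat) (S : {set 'I_n}) j : firstk S j \subset S.
Proof.
by apply/subsetP => x; rewrite /firstk inE => /mem_take; rewrite mem_enum.
Qed.

Lemma firstk_card (n : nat) (S : {set 'I_n}) j : j <= #|S| -> #|firstk S j| = j.
Proof.
move=> hj; rewrite /firstk cardsE.
have/card_uniqP -> : uniq (take j (enum S)) by apply: take_uniq; exact: enum_uniq.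
by rewrite size_takel // -cardE.
Qed.

Section Game.
Variables (n gamma : nat) (col : 'I_n -> 'I_gamma) (R B : 'I_n) (Gs : {set 'I_n})
  (cR cB cG : 'I_gamma).
Hypotheses (HcRB : cR != cB) (HcRG : cR != cG) (HcBG : cB != cG)
  (HDR : [set i | col i == cR] = [set R])
  (HDB : [set i | col i == cB] = [set B])
  (HDG : [set i | col i == cG] = Gs).

Local Notation U := (Gs :|: [set R; B]).

Lemma colR i : (col i == cR) = (i == R).
Proof. by have := congr1 (fun A : {set 'I_n} => i \in A) HDR; rewrite !inE. Qed.
Lemma colB i : (col i == cB) = (i == B).
Proof. by have := congr1 (fun A : {set 'I_n} => i \in A) HDB; rewrite !inE. Qed.
Lemma colG i : (col i == cG) = (i \in Gs).
Proof. by have := congr1 (fun A : {set 'I_n} => i \in A) HDG; rewrite !inE. Qed.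

Lemma colRe : col R = cR. Proof. by apply/eqP; rewrite colR. Qed.
Lemma colBe : col B = cB. Proof. by apply/eqP; rewrite colB. Qed.

Lemma RnG : R \notin Gs. Proof. by rewrite -colG colRe. Qed.
Lemma BnG : B \notin Gs. Proof. by rewrite -colG colBe. Qed.
Lemma RnB : R != B.
Proof. by apply/eqP => h; move: HcRB; rewrite -colRe -colBe h eqxx. Qed.

Lemma notRB x : x \in Gs -> (x == R) = false /\ (x == B) = false.
Proof.
by move=> hx; split; apply/eqP => h; [move: RnG|move: BnG]; rewrite -h hx.
Qed.

Lemma inU x : (x \in U) = [|| x \in Gs, x == R | x == B].
Proof. by rewrite !inE. Qed.

Lemma cnt1 (X : {set 'I_n}) a : #|[set i in X | i == a]| = (a \in X).
Proof.
case: (boolP (a \in X)) => h.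
  have -> : [set i in X | i == a] = [set a].
    by apply/setP => i; rewrite !inE; case: eqP => [->|_]; rewrite ?andbT ?andbF.
  by rewrite cards1.
have -> : [set i in X | i == a] = set0.
  by apply/setP => i; rewrite !inE; case: eqP => [->|_]; rewrite ?andbT ?andbF // (negbTE h).
by rewrite cards0.
Qed.

Lemma cntE (X : {set 'I_n}) c : X \subset U ->
  #|[set i in X | col i == c]| = if c == cG then #|X :&: Gs| else
     if c == cR then nat_of_bool (R \in X) else if c == cB then nat_of_bool (B \in X) else 0.
Proof.
move=> hX; case: eqP => [->|hG].
  by apply: eq_card => i; rewrite !inE colG.
case: eqP => [->|hR].
  by rewrite -cnt1; apply: eq_card => i; rewrite !inE colR.
case: eqP => [->|hB].
  by rewrite -cnt1; apply: eq_card => i; rewrite !inE colB.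
apply/eqP; rewrite cards_eq0; apply/eqP/setP => i; rewrite !inE.
apply/negbTE/negP => /andP[hi /eqP hc]; move: (subsetP hX i hi); rewrite inU.
by case/or3P; [rewrite -colG hc => /eqP|rewrite -colR hc => /eqP|rewrite -colB hc => /eqP].
Qed.

Lemma card_RB (A : {set 'I_n}) : A \subset [set R; B] ->
  #|A| = nat_of_bool (R \in A) + nat_of_bool (B \in A).
Proof.
move=> hA.
have e : A =i [seq x <- [:: R; B] | x \in A].
  move=> x; rewrite mem_filter; case hx: (x \in A) => //=.
  by have := subsetP hA x hx; rewrite !inE.
rewrite (eq_card e).
have /card_uniqP -> : uniq [seq x <- [:: R; B] | x \in A].
  by rewrite filter_uniq //= inE RnB.
by rewrite /=; case: (R \in A); case: (B \in A).
Qed.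

Lemma cardE' (X : {set 'I_n}) : X \subset U ->
  #|X| = #|X :&: Gs| + nat_of_bool (R \in X) + nat_of_bool (B \in X).
Proof.
move=> hX; rewrite -{1}(cardsID Gs X) [#|X :\: Gs|]card_RB.
  rewrite !inE (negbTE RnG) (negbTE BnG) /=; lia.
apply/subsetP => x; rewrite !inE => /andP[nG xX].
by have := subsetP hX x xX; rewrite !inE (negbTE nG).
Qed.

Lemma pal_sig (X Y : {set 'I_n}) : X \subset U -> Y \subset U ->
  #|X :&: Gs| = #|Y :&: Gs| -> (R \in X) = (R \in Y) -> (B \in X) = (B \in Y) ->
  palette col X = palette col Y.
Proof.
move=> hX hY h1 h2 h3; apply/ffunP => c; rewrite !ffunE !cntE //.
by rewrite (cardE' hX) (cardE' hY) h1 h2 h3.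
Qed.

Lemma pal_G (X : {set 'I_n}) : X \subset Gs -> X != set0 -> palette col X = palette col Gs.
Proof.
have key (Y : {set 'I_n}) : Y \subset Gs -> Y != set0 ->
    palette col Y = [ffun c => ((c == cG)%:R)%R].
  move=> hY hY0; have hYU : Y \subset U.
    by apply/subsetP => x hx; rewrite inU (subsetP hY x hx).
  have hRY : R \in Y = false by apply/negP => /(subsetP hY); apply/negP; exact: RnG.
  have hBY : B \in Y = false by apply/negP => /(subsetP hY); apply/negP; exact: BnG.
  apply/ffunP => c; rewrite !ffunE cntE // hRY hBY (setIidPl hY).
  case: eqP => _; last by rewrite !if_same mul0r.
  by rewrite divff // pnatr_eq0 cards_eq0.
move=> h1 h2; rewrite (key X) // key //; apply/set0Pn.
by case/set0Pn: h2 => x hx; exists x; exact: subsetP h1 x hx.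
Qed.

Lemma bit_eq (x y : bool) (p q : nat) : 0 < p -> 0 < q ->
  x * q = y * p -> x = y.
Proof. by case: x; case: y => //= hp hq; lia. Qed.

Lemma pal_inv (X Y : {set 'I_n}) : X != set0 -> Y \subset U -> Y != set0 ->
  palette col X = palette col Y ->
  [/\ X \subset U, (R \in X) = (R \in Y), (B \in X) = (B \in Y) &
      (R \in Y) || (B \in Y) -> #|X :&: Gs| = #|Y :&: Gs|].
Proof.
move=> hX0 hY hY0 hp.
have eq c : #|[set i in X | col i == c]| * #|Y| = #|[set i in Y | col i == c]| * #|X|.
  apply: nat_div_eq; rewrite ?card_gt0 //.
  by have := congr1 (fun p : palette_t gamma => p c) hp; rewrite /= !ffunE.
have hXU : X \subset U.
  apply/subsetP => x hx; rewrite inU.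
  have [/eqP|hg] := eqVneq (col x) cG; first by rewrite colG => ->.
  have [/eqP|hr] := eqVneq (col x) cR; first by rewrite colR => ->; rewrite orbT.
  have [/eqP|hb] := eqVneq (col x) cB; first by rewrite colB => ->; rewrite !orbT.
  exfalso; have := eq (col x); rewrite (cntE _ hY) (negbTE hg) (negbTE hr) (negbTE hb) mul0n.
  move=> /eqP; rewrite muln_eq0 [#|Y| == 0]cards_eq0 (negbTE hY0) orbF cards_eq0 => /eqP/setP/(_ x).
  by rewrite !inE hx eqxx.
have eG := eq cG; have eR := eq cR; have eB := eq cB.
rewrite !cntE // in eG eR eB.
rewrite eqxx in eG; rewrite (negbTE HcRG) eqxx in eR.
rewrite (negbTE HcBG) (eq_sym cB cR) (negbTE HcRB) eqxx in eB.
have pX : 0 < #|X| by rewrite card_gt0.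
have pY : 0 < #|Y| by rewrite card_gt0.
rewrite (cardE' hXU) (cardE' hY) in eG.
have bR : (R \in X) = (R \in Y) by apply: (bit_eq pX pY).
have bB : (B \in X) = (B \in Y) by apply: (bit_eq pX pY).
split => // hk.
have kpos : 0 < nat_of_bool (R \in Y) + nat_of_bool (B \in Y).
  by move: hk; case: (R \in Y); case: (B \in Y).
move: eG; rewrite bR bB -!addnA.
move: (nat_of_bool (R \in Y) + nat_of_bool (B \in Y)) kpos => k kpos.
move: #|X :&: Gs| #|Y :&: Gs| => a b.
rewrite !mulnDr (mulnC b a) => /eqP; rewrite eqn_add2l eqn_pmul2r //; exact/eqP.
Qed.

Variables (pref : 'I_n -> rel (palette_t gamma)) (MG : palette_t gamma -> Prop).
Hypothesis Hwo : forall i, weak_order (pref i).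
Hypothesis Hm : 1 <= #|Gs|.

Local Notation pal X := (palette col X).
Local Notation m := #|Gs|.
Local Notation GjR j := (pal (firstk Gs j :|: [set R])).
Local Notation GjB j := (pal (firstk Gs j :|: [set B])).
Local Notation RB := (pal [set R; B]).
Local Notation Rp := (pal [set R]).
Local Notation Bp := (pal [set B]).
Local Notation Gp := (pal Gs).

Hypotheses
 (hR1 : strict (pref R) RB (GjR m))
 (hR2 : forall j, 1 <= j < m -> strict (pref R) (GjR j.+1) (GjR j))
 (hR3 : strict (pref R) (GjR 1) Rp)
 (hR4 : forall X : {set 'I_n}, X != set0 ->
     pal X <> RB -> pal X <> Rp ->
     (forall j, 1 <= j <= m -> pal X <> GjR j) ->
     strict (pref R) Rp (pal X))
 (hB1 : forall j, 1 <= j < m -> strict (pref B) (GjB j.+1) (GjB j))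
 (hB2 : strict (pref B) (GjB 1) RB)
 (hB3 : strict (pref B) RB Bp)
 (hB4 : forall X : {set 'I_n}, X != set0 ->
     pal X <> RB -> pal X <> Bp ->
     (forall j, 1 <= j <= m -> pal X <> GjB j) ->
     strict (pref B) Bp (pal X))
 (hG : forall g, g \in Gs ->
     (forall p, MG p -> strict (pref g) p (GjR m)) /\
     (forall j, 1 <= j < m -> strict (pref g) (GjR j.+1) (GjR j)) /\
     strict (pref g) (GjR 1) (GjB m) /\
     (forall j, 1 <= j < m -> strict (pref g) (GjB j.+1) (GjB j)) /\
     strict (pref g) (GjB 1) Gp /\
     (forall X : {set 'I_n}, X != set0 ->
        ~ MG (pal X) -> pal X <> Gp ->
        (forall j, 1 <= j <= m -> pal X <> GjR j) ->
        (forall j, 1 <= j <= m -> pal X <> GjB j) ->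
        strict (pref g) Gp (pal X))).

Lemma gGB_Gp g k : g \in Gs -> 1 <= k <= m -> strict (pref g) (GjB k) Gp.
Proof.
move=> hg; have [_ [_ [_ [hc2 [h2 _]]]]] := hG hg.
exact: (@chain_lo _ _ (fun j => GjB j) m _ (Hwo g) hc2 h2).
Qed.

Lemma gGR1_GB g i : g \in Gs -> 1 <= i <= m -> strict (pref g) (GjR 1) (GjB i).
Proof.
move=> hg; have [_ [_ [h1 [hc2 _]]]] := hG hg.
exact: (@chain_hi _ _ (fun j => GjB j) m _ (Hwo g) hc2 h1).
Qed.

Lemma gGR_GB g k i : g \in Gs -> 1 <= k <= m -> 1 <= i <= m ->
  strict (pref g) (GjR k) (GjB i).
Proof.
move=> hg hk hi; have [_ [hc1 _]] := hG hg.
exact: (@chain_lo _ _ (fun j => GjR j) m _ (Hwo g) hc1 (gGR1_GB hg hi)).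
Qed.

Lemma gGR_Gp g k : g \in Gs -> 1 <= k <= m -> strict (pref g) (GjR k) Gp.
Proof.
move=> hg hk; have [_ [hc1 _]] := hG hg.
apply: (@chain_lo _ _ (fun j => GjR j) m _ (Hwo g) hc1) => //.
apply: (strict_trans (Hwo g) (b := GjB m)); first by apply: gGR1_GB => //; lia.
by apply: gGB_Gp => //; lia.
Qed.

Lemma R_RB_GR k : 1 <= k <= m -> strict (pref R) RB (GjR k).
Proof. exact: (@chain_hi _ _ (fun j => GjR j) m _ (Hwo R) hR2 hR1). Qed.

Lemma B_GB_RB k : 1 <= k <= m -> strict (pref B) (GjB k) RB.
Proof. exact: (@chain_lo _ _ (fun j => GjB j) m _ (Hwo B) hB1 hB2). Qed.

Lemma YR_props j : j <= m ->
  [/\ firstk Gs j :|: [set R] \subset U, firstk Gs j :|: [set R] != set0,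
      #|(firstk Gs j :|: [set R]) :&: Gs| = j, R \in firstk Gs j :|: [set R] &
      B \notin firstk Gs j :|: [set R]].
Proof.
move=> hj; have hs := firstk_sub Gs j; split.
- apply/subsetP => x; rewrite in_setU in_set1 => /orP[/(subsetP hs) hx|/eqP ->].
    by rewrite inU hx.
  by rewrite inU eqxx orbT.
- by apply/set0Pn; exists R; rewrite in_setU in_set1 eqxx orbT.
- rewrite -[RHS](firstk_card hj); apply: eq_card => x.
  rewrite in_setI in_setU in_set1; case hx: (x \in firstk Gs j) => /=.
    by rewrite (subsetP hs x hx).
  by case: eqP => // ->; rewrite (negbTE RnG).
- by rewrite in_setU in_set1 eqxx orbT.
- rewrite in_setU in_set1 negb_or eq_sym RnB andbT.
  by apply/negP => /(subsetP hs); apply/negP; exact: BnG.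
Qed.

Lemma YB_props j : j <= m ->
  [/\ firstk Gs j :|: [set B] \subset U, firstk Gs j :|: [set B] != set0,
      #|(firstk Gs j :|: [set B]) :&: Gs| = j, B \in firstk Gs j :|: [set B] &
      R \notin firstk Gs j :|: [set B]].
Proof.
move=> hj; have hs := firstk_sub Gs j; split.
- apply/subsetP => x; rewrite in_setU in_set1 => /orP[/(subsetP hs) hx|/eqP ->].
    by rewrite inU hx.
  by rewrite inU eqxx !orbT.
- by apply/set0Pn; exists B; rewrite in_setU in_set1 eqxx orbT.
- rewrite -[RHS](firstk_card hj); apply: eq_card => x.
  rewrite in_setI in_setU in_set1; case hx: (x \in firstk Gs j) => /=.
    by rewrite (subsetP hs x hx).
  by case: eqP => // ->; rewrite (negbTE BnG).
- by rewrite in_setU in_set1 eqxx orbT.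
- rewrite in_setU in_set1 negb_or RnB andbT.
  by apply/negP => /(subsetP hs); apply/negP; exact: RnG.
Qed.

Lemma RB_props : [/\ [set R; B] \subset U, [set R; B] != set0,
   #|[set R; B] :&: Gs| = 0, R \in [set R; B] & B \in [set R; B]].
Proof.
split.
- by apply/subsetP => x; rewrite !inE => ->; rewrite orbT.
- by apply/set0Pn; exists R; rewrite !inE eqxx.
- apply/eqP; rewrite cards_eq0; apply/eqP/setP => x; rewrite !inE.
  by case hx: (x \in Gs); [case: (notRB hx) => h1 h2; rewrite ?h1 ?h2|rewrite andbF].
- by rewrite !inE eqxx.
- by rewrite !inE eqxx orbT.
Qed.

Lemma R1_props : [/\ [set R] \subset U, [set R] != set0,
   #|[set R] :&: Gs| = 0, R \in [set R] & B \notin [set R]].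
Proof.
split.
- by apply/subsetP => x; rewrite !inE => ->; rewrite !orbT.
- by apply/set0Pn; exists R; rewrite !inE eqxx.
- apply/eqP; rewrite cards_eq0; apply/eqP/setP => x; rewrite !inE.
  by case hx: (x \in Gs); [case: (notRB hx) => h1 h2; rewrite ?h1 ?h2|rewrite andbF].
- by rewrite !inE eqxx.
- by rewrite !inE eq_sym; exact: RnB.
Qed.

Lemma B1_props : [/\ [set B] \subset U, [set B] != set0,
   #|[set B] :&: Gs| = 0, B \in [set B] & R \notin [set B]].
Proof.
split.
- by apply/subsetP => x; rewrite !inE => ->; rewrite !orbT.
- by apply/set0Pn; exists B; rewrite !inE eqxx.
- apply/eqP; rewrite cards_eq0; apply/eqP/setP => x; rewrite !inE.
  by case hx: (x \in Gs); [case: (notRB hx) => h1 h2; rewrite ?h1 ?h2|rewrite andbF].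
- by rewrite !inE eqxx.
- by rewrite !inE; exact: RnB.
Qed.

Lemma Gs_props : [/\ Gs \subset U, Gs != set0, R \notin Gs & B \notin Gs].
Proof.
split.
- by apply/subsetP => x; rewrite inU => ->.
- by rewrite -card_gt0.
- exact: RnG.
- exact: BnG.
Qed.

Variable P : {set {set 'I_n}}.
Hypothesis hP : partition P [set: 'I_n].

Local Notation goal := (~ individually_stable col pref P /\ ~ nash_stable col pref P).

Lemma dev_done i (C : {set 'I_n}) : (C \in P \/ C = set0) -> i \notin C ->
  strict (pref i) (pal (C :|: [set i])) (pal (pblock P i)) ->
  (forall j, j \in C -> pref j (pal (C :|: [set i])) (pal C)) -> goal.
Proof.
by move=> h1 h2 h3 h4; split => h; apply: (h i); exists C.
Qed.

Lemma hcov : cover P = [set: 'I_n].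
Proof. by case/and3P: hP => /eqP. Qed.
Lemma htriv : trivIset P.
Proof. by case/and3P: hP. Qed.
Lemma pb_in x : x \in pblock P x.
Proof. by rewrite mem_pblock hcov inE. Qed.
Lemma pb_mem x : pblock P x \in P.
Proof. by apply: pblock_mem; rewrite hcov inE. Qed.
Lemma pb_eq x y : y \in pblock P x -> pblock P y = pblock P x.
Proof. by move=> h; apply: def_pblock htriv (pb_mem x) h. Qed.
Lemma pb_n0 x : pblock P x != set0.
Proof. by apply/set0Pn; exists x; exact: pb_in. Qed.

Lemma alone_R : pal (pblock P R) <> RB -> pal (pblock P R) <> Rp ->
  (forall j, 1 <= j <= m -> pal (pblock P R) <> GjR j) -> goal.
Proof.
move=> h1 h2 h3; apply: (@dev_done R set0); [by right|by rewrite in_set0| |by move=> j; rewrite in_set0].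
by rewrite set0U; apply: hR4 => //; exact: pb_n0.
Qed.

Lemma alone_B : pal (pblock P B) <> RB -> pal (pblock P B) <> Bp ->
  (forall j, 1 <= j <= m -> pal (pblock P B) <> GjB j) -> goal.
Proof.
move=> h1 h2 h3; apply: (@dev_done B set0); [by right|by rewrite in_set0| |by move=> j; rewrite in_set0].
by rewrite set0U; apply: hB4 => //; exact: pb_n0.
Qed.

Lemma alone_g g : g \in Gs -> ~ MG (pal (pblock P g)) -> pal (pblock P g) <> Gp ->
  (forall j, 1 <= j <= m -> pal (pblock P g) <> GjR j) ->
  (forall j, 1 <= j <= m -> pal (pblock P g) <> GjB j) -> goal.
Proof.
move=> hg h0 h1 h2 h3; apply: (@dev_done g set0); [by right|by rewrite in_set0| |by move=> j; rewrite in_set0].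
rewrite set0U (@pal_G [set g]); last by apply/set0Pn; exists g; rewrite inE.
  have [_ [_ [_ [_ [_ h5]]]]] := hG hg; apply: h5 => //; exact: pb_n0.
by apply/subsetP => x; rewrite inE => /eqP ->.
Qed.

Lemma join_R a : a \in Gs -> a \notin pblock P R -> B \notin pblock P R ->
  pblock P R \subset U ->
  (forall k, 1 <= k <= m -> strict (pref a) (GjR k) (pal (pblock P a))) -> goal.
Proof.
move=> ha haR hBR hU hpa.
set CR := pblock P R.
set i := #|CR :&: Gs|.
have hi : i < m.
  rewrite (cardsD1 a Gs) ha add1n ltnS; apply: subset_leq_card.
  apply/subsetP => x; rewrite !inE => /andP[hx ->]; rewrite andbT.
  by apply/eqP => e; move: haR; rewrite -e hx.
have hRC : R \in CR by exact: pb_in.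
have e1 : pal (CR :|: [set a]) = GjR i.+1.
  have [h1 _ h3 h4 h5] := YR_props hi.
  apply: pal_sig => //.
  - apply/subsetP => x /setUP [/(subsetP hU) //|]; rewrite in_set1 => /eqP ->.
    by rewrite inU ha.
  - rewrite h3.
    have -> : (CR :|: [set a]) :&: Gs = a |: (CR :&: Gs).
      apply/setP => x; rewrite !inE; case: (eqVneq x a) => [->|_]; by rewrite ?ha ?orbT ?orbF.
    by rewrite cardsU1 inE (negbTE haR).
  - by rewrite in_setU hRC h4.
  - by rewrite in_setU in_set1 (negbTE hBR) (negbTE h5) /=; case: (notRB ha) => _; rewrite eq_sym => ->.
have palCR : pal CR = if i == 0 then Rp else GjR i.
  case: eqP => [i0|/eqP in0].
    have [h1 _ h3 h4 h5] := R1_props; apply: pal_sig => //.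
    - by rewrite h3; move: i0; rewrite /i.
    - by rewrite hRC h4.
    - by rewrite (negbTE hBR) (negbTE h5).
  have [h1 _ h3 h4 h5] := YR_props (ltnW hi); apply: pal_sig => //.
  - by rewrite hRC h4.
  - by rewrite (negbTE hBR) (negbTE h5).
apply: (@dev_done a CR); [by left; exact: pb_mem|exact: haR| |].
  by rewrite e1; apply: hpa; exact: hi.
move=> x hx; rewrite e1 palCR.
have := subsetP hU x hx; rewrite inU => /or3P[hxG|/eqP ->|/eqP e]; last first.
- by move: hBR; rewrite -e hx.
- case: eqP => [i0|/eqP in0].
    have -> : i.+1 = 1 by rewrite i0.
    exact: strictW hR3.
  by apply: strictW; apply: hR2; rewrite lt0n in0 hi.
have ipos : 0 < i by apply/card_gt0P; exists x; rewrite inE hx hxG.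
rewrite eqn0Ngt ipos /=.
have [_ [hc1 _]] := hG hxG; apply: strictW; apply: hc1; by rewrite ipos hi.
Qed.

Lemma R_tri : pal (pblock P R) = RB \/
  (pblock P R \subset U /\ B \notin pblock P R) \/ goal.
Proof.
case: (classic (pal (pblock P R) = RB)) => [e|n1]; first by left.
right; case: (classic (pal (pblock P R) = Rp \/
   exists2 i, 1 <= i <= m & pal (pblock P R) = GjR i)) => [[e|[i hi e]]|n2].
- have [h1 h2 _ _ h5] := R1_props.
  have [hU _ hB _] := pal_inv (pb_n0 R) h1 h2 e.
  by left; rewrite hB.
- have [h1 h2 _ _ h5] := YR_props (proj2 (andP hi)).
  have [hU _ hB _] := pal_inv (pb_n0 R) h1 h2 e.
  by left; rewrite hB.
right; apply: alone_R => //.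
  by move=> e; apply: n2; left.
by move=> j hj e; apply: n2; right; exists j.
Qed.

Lemma addG X a : a \notin Gs -> (X :|: [set a]) :&: Gs = X :&: Gs.
Proof.
move=> ha; apply/setP => x; rewrite !inE.
by case: (eqVneq x a) => [->|_]; rewrite ?orbT ?orbF ?(negbTE ha) ?andbF.
Qed.

Lemma main_sec : (exists2 g, g \in Gs & ~ MG (pal (pblock P g))) -> goal.
Proof.
case=> g hg hM.
have hgC := pb_in g; have hC0 := pb_n0 g.
move: hM hgC hC0; move CE: (pblock P g) => C hM hgC hC0.
have inC y : y \in C -> pblock P y = C by rewrite -CE; exact: pb_eq.
have [GU G0 GR GB] := Gs_props.
case: (classic (pal C = Gp)) => [e1|n1].
  have [hCU hRC hBC _] := pal_inv hC0 GU G0 e1.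
  rewrite (negbTE GR) in hRC; rewrite (negbTE GB) in hBC.
  have hCG : C \subset Gs.
    apply/subsetP => x hx; move: (subsetP hCU x hx); rewrite inU.
    by case/or3P => [//|/eqP e|/eqP e]; move: hRC hBC; rewrite -e hx.
  have [eRB|[[hU hBR]|//]] := R_tri.
    have [h1 h2 _ h4 h5] := RB_props.
    have [_ _ hBR _] := pal_inv (pb_n0 R) h1 h2 eRB.
    rewrite h5 in hBR.
    have ePB : pblock P B = pblock P R := pb_eq hBR.
    have hk : 0 < #|C| <= #|Gs|.
      by apply/andP; split; [apply/card_gt0P; exists g | exact: subset_leq_card hCG].
    have e2 : pal (C :|: [set B]) = GjB #|C|.
      have [y1 _ y3 y4 y5] := YB_props (proj2 (andP hk)).
      apply: pal_sig => //.
      - apply/subsetP => x /setUP [/(subsetP hCU) //|]; rewrite in_set1 => /eqP ->.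
        by rewrite inU eqxx !orbT.
      - by rewrite y3 addG // (setIidPl hCG).
      - by rewrite in_setU in_set1 hRC (negbTE RnB) (negbTE y5).
      - by rewrite in_setU in_set1 eqxx orbT y4.
    apply: (@dev_done B C); [by left; rewrite -CE; exact: pb_mem | by rewrite hBC | |].
      by rewrite e2 ePB eRB; apply: B_GB_RB.
    move=> x hx; rewrite e2 e1; apply: strictW; apply: gGB_Gp => //.
    exact: subsetP hCG x hx.
  apply: (join_R hg) => //.
    by apply/negP => hgR; move: hRC; rewrite -CE (pb_eq hgR) pb_in.
  by move=> k hk; rewrite CE e1; exact: gGR_Gp.
case: (classic (exists2 j, 0 < j <= #|Gs| & pal C = GjR j)) => [[j hj e2]|n2].
  have [y1 y2 y3 y4 y5] := YR_props (proj2 (andP hj)).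
  have [hCU hRC hBC hcard] := pal_inv hC0 y1 y2 e2.
  have hRC' : R \in C by rewrite hRC.
  rewrite (negbTE y5) in hBC.
  case: (classic (pal (pblock P B) = RB)) => [eRB|nRB].
    have [h1 h2 _ h4 h5] := RB_props.
    have [_ hRB _ _] := pal_inv (pb_n0 B) h1 h2 eRB.
    have hRB' : R \in pblock P B by rewrite hRB.
    by have := pb_in B; rewrite -(pb_eq hRB') (inC R hRC') hBC.
  case: (classic (pal (pblock P B) = Bp)) => [eBp|nBp].
    have [h1 h2 h3 h4 h5] := B1_props.
    have [hU hRB hBB hc] := pal_inv (pb_n0 B) h1 h2 eBp.
    rewrite (negbTE h5) in hRB.
    have hc0 : #|pblock P B :&: Gs| = 0 by rewrite -h3; apply: hc; rewrite h4 orbT.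
    have eRBp : pal (pblock P B :|: [set R]) = RB.
      have [r1 _ r3 r4 r5] := RB_props.
      apply: pal_sig => //.
      - apply/subsetP => x /setUP [/(subsetP hU) //|]; rewrite in_set1 => /eqP ->.
        by rewrite inU eqxx !orbT.
      - by rewrite addG // hc0 r3.
      - by rewrite in_setU in_set1 eqxx orbT r4.
      - by rewrite in_setU pb_in r5.
    apply: (@dev_done R (pblock P B)); [by left; exact: pb_mem | by rewrite hRB | |].
      by rewrite eRBp (inC R hRC') e2; apply: R_RB_GR.
    move=> x hx; rewrite eRBp eBp.
    move: (subsetP hU x hx); rewrite inU => /or3P [hxG|/eqP e|/eqP ->].
    - have : 0 < #|pblock P B :&: Gs| by apply/card_gt0P; exists x; rewrite inE hx hxG.
      by rewrite hc0.
    - by move: hRB; rewrite -e hx.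
    - exact: strictW hB3.
  case: (classic (exists2 i, 0 < i <= #|Gs| & pal (pblock P B) = GjB i)) => [[i hi e3]|n3].
    have [z1 z2 z3 z4 z5] := YB_props (proj2 (andP hi)).
    have [hU hRB hBB hc] := pal_inv (pb_n0 B) z1 z2 e3.
    have hci : #|pblock P B :&: Gs| = i by rewrite -z3; apply: hc; rewrite z4 orbT.
    have : 0 < #|pblock P B :&: Gs| by rewrite hci; case/andP: hi.
    case/card_gt0P => h; rewrite inE => /andP[hhB hhG].
    have ehB : pblock P h = pblock P B := pb_eq hhB.
    apply: (join_R hhG).
    - rewrite (inC R hRC'); apply/negP => hhC.
      by have := pb_in B; rewrite -ehB (inC h hhC) hBC.
    - by rewrite (inC R hRC') hBC.
    - by rewrite (inC R hRC').
    - by move=> k hk; rewrite ehB e3; exact: gGR_GB.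
  apply: alone_B => // i hi e; apply: n3; by exists i.
case: (classic (exists2 j, 0 < j <= #|Gs| & pal C = GjB j)) => [[j hj e3]|n3].
  have [y1 y2 y3 y4 y5] := YB_props (proj2 (andP hj)).
  have [hCU hRC hBC _] := pal_inv hC0 y1 y2 e3.
  have hBC' : B \in C by rewrite hBC.
  rewrite (negbTE y5) in hRC.
  have [eRB|[[hU hBR]|//]] := R_tri.
    have [h1 h2 _ h4 h5] := RB_props.
    have [_ _ hBR _] := pal_inv (pb_n0 R) h1 h2 eRB.
    have hBR' : B \in pblock P R by rewrite hBR.
    by have := pb_in R; rewrite -(pb_eq hBR') (inC B hBC') hRC.
  apply: (join_R hg) => //.
    by apply/negP => hgR; move: hRC; rewrite -CE (pb_eq hgR) pb_in.
  by move=> k hk; rewrite CE e3; exact: gGR_GB.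
apply: (alone_g hg); rewrite CE //.
  by move=> j hj e; apply: n2; exists j.
by move=> j hj e; apply: n3; exists j.
Qed.

End Game.

Theorem mainTheorem6
  (n gamma : nat) (col : 'I_n -> 'I_gamma)
  (pref : 'I_n -> rel (palette_t gamma))
  (Hwo : forall i, weak_order (pref i))
  (R B : 'I_n) (Gs : {set 'I_n}) (cR cB cG : 'I_gamma)
  (HcRB : cR != cB) (HcRG : cR != cG) (HcBG : cB != cG)
  (HDR : [set i | col i == cR] = [set R])
  (HDB : [set i | col i == cB] = [set B])
  (HDG : [set i | col i == cG] = Gs)
  (Hm : 1 <= #|Gs|)
  (MG : palette_t gamma -> Prop)
  (HMG : forall p, MG p -> exists X : {set 'I_n},
      (exists2 g, g \in X & g \in Gs) /\
      (exists2 o, o \in X & [&& col o != cR, col o != cB & col o != cG]) /\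
      p = palette col X) :
  let m := #|Gs| in
  let GjR j := palette col (firstk Gs j :|: [set R]) in
  let GjB j := palette col (firstk Gs j :|: [set B]) in
  let RB := palette col [set R; B] in
  let Rp := palette col [set R] in
  let Bp := palette col [set B] in
  let Gp := palette col Gs in
  (* preferences of R *)
  strict (pref R) RB (GjR m) ->
  (forall j, 1 <= j < m -> strict (pref R) (GjR j.+1) (GjR j)) ->
  strict (pref R) (GjR 1) Rp ->
  (forall X : {set 'I_n}, X != set0 ->
     palette col X <> RB -> palette col X <> Rp ->
     (forall j, 1 <= j <= m -> palette col X <> GjR j) ->
     strict (pref R) Rp (palette col X)) ->
  (* preferences of B *)
  (forall j, 1 <= j < m -> strict (pref B) (GjB j.+1) (GjB j)) ->
  strict (pref B) (GjB 1) RB ->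
  strict (pref B) RB Bp ->
  (forall X : {set 'I_n}, X != set0 ->
     palette col X <> RB -> palette col X <> Bp ->
     (forall j, 1 <= j <= m -> palette col X <> GjB j) ->
     strict (pref B) Bp (palette col X)) ->
  (* preferences of every green agent *)
  (forall g, g \in Gs ->
     (forall p, MG p -> strict (pref g) p (GjR m)) /\
     (forall j, 1 <= j < m -> strict (pref g) (GjR j.+1) (GjR j)) /\
     strict (pref g) (GjR 1) (GjB m) /\
     (forall j, 1 <= j < m -> strict (pref g) (GjB j.+1) (GjB j)) /\
     strict (pref g) (GjB 1) Gp /\
     (forall X : {set 'I_n}, X != set0 ->
        ~ MG (palette col X) -> palette col X <> Gp ->
        (forall j, 1 <= j <= m -> palette col X <> GjR j) ->
        (forall j, 1 <= j <= m -> palette col X <> GjB j) ->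
        strict (pref g) Gp (palette col X))) ->
  forall P : {set {set 'I_n}}, partition P [set: 'I_n] ->
    (exists2 g, g \in Gs & ~ MG (palette col (pblock P g))) ->
    ~ individually_stable col pref P /\ ~ nash_stable col pref P.
Proof.
move=> m GjR GjB RB Rp Bp Gp hR1 hR2 hR3 hR4 hB1 hB2 hB3 hB4 hG P hP hex.
exact: (main_sec HcRB HcRG HcBG HDR HDB HDG Hwo Hm hR1 hR2 hR3 hR4 hB1 hB2 hB3 hB4 hG hP hex).
Qed.
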